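(* Suppose Assumptions 1 and 2 hold. Consider the doubling-trick scheme: the rounds $1,2,3,\ldots$ are partitioned into consecutive periods $i=1,2,\ldots$, period $i$ consisting of $2^i$ rounds; in period $i$ a fresh copy of Algorithm 1 is run with horizon $2^i$, i.e. with $\gamma=(2^i)^{1/4}$ and $\alpha=\frac12(\beta^2+1)\sqrt{2^i}$, fresh initialization ($\mathbf{x}(0)\in\mathcal{X}_0$ arbitrary, $\mathbf{Q}(0)=\mathbf{0}$, and the update producing the period's first decision uses an arbitrary convex differentiable function with gradient norm at most $D$ on $\mathcal{X}_0$ in place of $f^0$), and its decisions $\mathbf{x}(1),\mathbf{x}(2),\ldots$ are played in the successive rounds of the period, the $j$-th round of the period being fed the loss of that global round. Let $\mathbf{y}(s)$ denote the decision played at global round $s$. Then there exist constants $C_1,C_2>0$ depending only on $D,\beta,G,R,\epsilon$ such that for every $T\ge2$ (the horizon not being known to the scheme), every $\mathbf{x}^*\in\mathcal{X}_0$ with $\mathbf{g}(\mathbf{x}^* )\le\mathbf{0}$, and every $k\in\{1,\ldots,m\}$, $$\sum_{s=1}^T f^s(\mathbf{y}(s))-\sum_{s=1}^T f^s(\mathbf{x}^* )\le C_1\sqrt T,\qquad \sum_{s=1}^T g_k(\mathbf{y}(s))\le C_2\log_2 T.$$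
   Context: Setting: $n,m$ positive integers; $\mathcal{X}_0\subset\mathbb{R}^n$ is a nonempty compact convex set; $\mathbf{g}=(g_1,\ldots,g_m)^{\mathsf T}:\mathbb{R}^n\to\mathbb{R}^m$ with each $g_k$ convex and continuous; $f^t$, $t=0,1,2,\ldots$, are convex differentiable real functions on (a neighborhood of) $\mathcal{X}_0$. All norms are Euclidean. Assumption 1: there are constants $D,\beta,G,R>0$ with $\|\nabla f^t(\mathbf{x})\|\le D$ for all $\mathbf{x}\in\mathcal{X}_0$ and all $t\ge0$; $\|\mathbf{g}(\mathbf{x})-\mathbf{g}(\mathbf{y})\|\le\beta\|\mathbf{x}-\mathbf{y}\|$ for all $\mathbf{x},\mathbf{y}\in\mathcal{X}_0$; $\|\mathbf{g}(\mathbf{x})\|\le G$ for all $\mathbf{x}\in\mathcal{X}_0$; $\|\mathbf{x}-\mathbf{y}\|\le R$ for all $\mathbf{x},\mathbf{y}\in\mathcal{X}_0$. Assumption 2 (Slater condition): there exist $\epsilon>0$ and $\hat{\mathbf{x}}\in\mathcal{X}_0$ with $g_k(\hat{\mathbf{x}})\le-\epsilon$ for all $k\in\{1,\ldots,m\}$. Algorithm 1 (parameters $\gamma>0,\alpha>0$): let $\tilde{\mathbf{g}}(\mathbf{x})=\gamma\mathbf{g}(\mathbf{x})$. Choose any $\mathbf{x}(0)\in\mathcal{X}_0$ and set $Q_k(0)=0$ for all $k$. For each $t=0,1,2,\ldots$: set $Q_k(t+1)=\max\{-\tilde g_k(\mathbf{x}(t)),\,Q_k(t)+\tilde g_k(\mathbf{x}(t))\}$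 for $k=1,\ldots,m$, and let $\mathbf{x}(t+1)$ be a minimizer over $\mathbf{x}\in\mathcal{X}_0$ of $[\nabla f^t(\mathbf{x}(t))]^{\mathsf T}(\mathbf{x}-\mathbf{x}(t))+[\mathbf{Q}(t+1)+\tilde{\mathbf{g}}(\mathbf{x}(t))]^{\mathsf T}\tilde{\mathbf{g}}(\mathbf{x})+\alpha\|\mathbf{x}-\mathbf{x}(t)\|^2$, where $\mathbf{Q}(t)=(Q_1(t),\ldots,Q_m(t))^{\mathsf T}$; here $f^t$ denotes the loss function revealed at the end of the algorithm's round $t$. *)

(* Defs.v *)
From mathcomp Require Import all_boot.
From Stdlib Require Import Reals.
Open Scope R_scope.

Definition vec (n : nat) := 'I_n -> R.

Definition vadd {n} (x y : vec n) : vec n := fun i => x i + y i.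
Definition vsub {n} (x y : vec n) : vec n := fun i => x i - y i.
Definition vscale {n} (a : R) (x : vec n) : vec n := fun i => a * x i.
Definition dot {n} (x y : vec n) : R := \big[Rplus/0]_(i < n) (x i * y i).
Definition vnorm {n} (x : vec n) : R := sqrt (dot x x).

Definition vcomb {n} (l : R) (x y : vec n) : vec n :=
  vadd (vscale l x) (vscale (1 - l) y).

Definition convex_set {n} (S : vec n -> Prop) : Prop :=
  forall x y l, S x -> S y -> 0 <= l <= 1 -> S (vcomb l x y).

Definition convex_on {n} (S : vec n -> Prop) (f : vec n -> R) : Prop :=
  forall x y l, S x -> S y -> 0 <= l <= 1 ->
    f (vcomb l x y) <= l * f x + (1 - l) * f y.

Definition compact_set {n} (K : vec n -> Prop) : Prop :=
  forall u : nat -> vec n, (forall k, K (u k)) ->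
    exists (phi : nat -> nat) (z : vec n),
      (forall k, (phi k < phi (S k))%nat) /\ K z /\
      forall eps, 0 < eps -> exists N, forall k, (N <= k)%nat ->
        vnorm (vsub (u (phi k)) z) < eps.

Definition continuous_at {n} (f : vec n -> R) (x : vec n) : Prop :=
  forall eps, 0 < eps -> exists del, 0 < del /\
    forall y, vnorm (vsub y x) < del -> Rabs (f y - f x) < eps.

Definition has_grad {n} (f : vec n -> R) (x v : vec n) : Prop :=
  forall eps, 0 < eps -> exists del, 0 < del /\
    forall h, vnorm h < del ->
      Rabs (f (vadd x h) - f x - dot v h) <= eps * vnorm h.

Definition nbhd {n} (S : vec n -> Prop) (del : R) : vec n -> Prop :=
  fun x => exists z, S z /\ vnorm (vsub x z) < del.

Definition cvx_diff_near {n} (X0 : vec n -> Prop) (f : vec n -> R) : Prop :=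
  exists del, 0 < del /\ convex_on (nbhd X0 del) f /\
    forall x, nbhd X0 del x -> exists v, has_grad f x v.

Definition grad_bounded {n} (X0 : vec n -> Prop) (f : vec n -> R) (D : R) : Prop :=
  forall x v, X0 x -> has_grad f x v -> vnorm v <= D.

Definition gvec {n m} (g : 'I_m -> vec n -> R) (x : vec n) : vec m :=
  fun k => g k x.

Definition setting {n m} (X0 : vec n -> Prop) (g : 'I_m -> vec n -> R)
  (f : nat -> vec n -> R) (D beta G Rd eps : R) : Prop :=
  (0 < n)%nat /\ (0 < m)%nat /\
  (exists x, X0 x) /\ compact_set X0 /\ convex_set X0 /\
  (forall k, convex_on (fun _ => True) (g k) /\ forall x, continuous_at (g k) x) /\
  (forall t, cvx_diff_near X0 (f t)) /\
  (* Assumption 1 *)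
  0 < D /\ 0 < beta /\ 0 < G /\ 0 < Rd /\
  (forall t, grad_bounded X0 (f t) D) /\
  (forall x y, X0 x -> X0 y ->
     vnorm (vsub (gvec g x) (gvec g y)) <= beta * vnorm (vsub x y)) /\
  (forall x, X0 x -> vnorm (gvec g x) <= G) /\
  (forall x y, X0 x -> X0 y -> vnorm (vsub x y) <= Rd) /\
  (* Assumption 2 (Slater) *)
  0 < eps /\ (exists xh, X0 xh /\ forall k, g k xh <= - eps).

(* One step of Algorithm 1 with parameters gam, alp: given x(t), Q(t), a
   gradient v of the loss f^t at x(t), the pair (Q(t+1), x(t+1)) is valid. *)
Definition alg1_step {n m} (X0 : vec n -> Prop) (g : 'I_m -> vec n -> R)
  (gam alp : R) (xt : vec n) (Qt : vec m) (v : vec n)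
  (Qt1 : vec m) (xt1 : vec n) : Prop :=
  (forall k, Qt1 k = Rmax (- (gam * g k xt)) (Qt k + gam * g k xt)) /\
  let obj := fun x : vec n =>
    dot v (vsub x xt)
    + dot (fun k => Qt1 k + gam * g k xt) (fun k => gam * g k x)
    + alp * (vnorm (vsub x xt)) ^ 2 in
  X0 xt1 /\ forall x, X0 x -> obj xt1 <= obj x.

(* Global round at which the j-th round (j >= 1) of period i (i >= 1) occurs:
   period i occupies the global rounds 2^i - 1, ..., 2^(i+1) - 2. *)
Definition glob_round (i j : nat) : nat := (2 ^ i - 2 + j)%nat.

(* Loss fed to the local copy of period i at local time t: the arbitrary
   function h in place of f^0, and the global round's loss otherwise. *)
Definition local_loss {n} (f : nat -> vec n -> R) (h : vec n -> R) (i t : nat)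
  : vec n -> R :=
  match t with O => h | _ => f (glob_round i t) end.

(* The doubling-trick scheme: xs i, Qs i are the iterates of the copy of
   Algorithm 1 run in period i (i >= 1), h i the arbitrary initial function,
   and y s the decision played at global round s. *)
Definition doubling_run {n m} (X0 : vec n -> Prop) (g : 'I_m -> vec n -> R)
  (f : nat -> vec n -> R) (D beta : R)
  (h : nat -> vec n -> R) (xs : nat -> nat -> vec n) (Qs : nat -> nat -> vec m)
  (y : nat -> vec n) : Prop :=
  forall i, (1 <= i)%nat ->
    let gam := Rpower (2 ^ i) (1 / 4) in
    let alp := (1 / 2) * (beta ^ 2 + 1) * sqrt (2 ^ i) in
    cvx_diff_near X0 (h i) /\ grad_bounded X0 (h i) D /\
    X0 (xs i O) /\ (forall k, Qs i O k = 0) /\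
    (forall t, (t < 2 ^ i)%nat ->
       exists v, has_grad (local_loss f (h i) i t) (xs i t) v /\
         alg1_step X0 g gam alp (xs i t) (Qs i t) v (Qs i (S t)) (xs i (S t))) /\
    (forall j, (1 <= j <= 2 ^ i)%nat -> y (glob_round i j) = xs i j).

Fixpoint sum1 (a : nat -> R) (T : nat) : R :=
  match T with O => 0 | S T' => sum1 a T' + a T end.

Definition log2 (x : R) : R := ln x / ln 2.

(* Main.v *)
Require Import Defs.
From HB Require Import structures.
From mathcomp Require Import all_boot zify.
From Stdlib Require Import Reals Lra Psatz FunctionalExtensionality.
Open Scope R_scope.

HB.instance Definition _ := Monoid.isComLaw.Build R 0 Rplus (fun a b c => esym (Rplus_assoc a b c)) Rplus_comm Rplus_0_l.

Section V.
Context {n : nat}.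
Implicit Types x y z : vec n.

Lemma big_add (F G : 'I_n -> R) :
  \big[Rplus/0]_(i < n) (F i + G i) = \big[Rplus/0]_(i < n) F i + \big[Rplus/0]_(i < n) G i.
Proof. by rewrite big_split. Qed.

Lemma big_scale (c : R) (F : 'I_n -> R) :
  \big[Rplus/0]_(i < n) (c * F i) = c * \big[Rplus/0]_(i < n) F i.
Proof.
apply: (big_rec2 (fun a b => a = c * b)); first by ring.
by move=> i a b _ ->; ring.
Qed.

Lemma big_le (F G : 'I_n -> R) : (forall i, F i <= G i) ->
  \big[Rplus/0]_(i < n) F i <= \big[Rplus/0]_(i < n) G i.
Proof.
move=> H; apply: (big_rec2 (fun a b => a <= b)); first lra.
move=> i a b _ Hab; have := H i; lra.
Qed.

Lemma big_ge0 (F : 'I_n -> R) : (forall i, 0 <= F i) -> 0 <= \big[Rplus/0]_(i < n) F i.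
Proof.
move=> H; apply: (big_ind (fun a => 0 <= a)); first lra.
- move=> a b; lra.
- by move=> i _; apply: H.
Qed.

Lemma big_ge1 (F : 'I_n -> R) k : (forall i, 0 <= F i) -> F k <= \big[Rplus/0]_(i < n) F i.
Proof.
move=> H; rewrite (bigD1 k) //=.
have : 0 <= \big[Rplus/0]_(i < n | i != k) F i.
  apply: (big_ind (fun a => 0 <= a)).
  - lra.
  - move=> a b; lra.
  - by move=> i _; apply: H.
move=> Hs; rewrite -{1}(Rplus_0_r (F k)); exact: Rplus_le_compat_l.
Qed.

Lemma dot_comm x y : dot x y = dot y x.
Proof. rewrite /dot; apply: eq_bigr => i _; ring. Qed.
Lemma dot_addl x y z : dot (vadd x y) z = dot x z + dot y z.
Proof. rewrite /dot -big_add; apply: eq_bigr => i _; rewrite /vadd; ring. Qed.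
Lemma dot_subl x y z : dot (vsub x y) z = dot x z - dot y z.
Proof.
rewrite /dot; have -> : \big[Rplus/0]_(i < n) (x i * z i) =
  \big[Rplus/0]_(i < n) ((vsub x y) i * z i + y i * z i).
  by apply: eq_bigr => i _; rewrite /vsub; ring.
rewrite big_add; ring.
Qed.
Lemma dot_scalel a x y : dot (vscale a x) y = a * dot x y.
Proof. rewrite /dot -big_scale; apply: eq_bigr => i _; rewrite /vscale; ring. Qed.
Lemma dot_addr x y z : dot z (vadd x y) = dot z x + dot z y.
Proof. by rewrite dot_comm dot_addl !(dot_comm z). Qed.
Lemma dot_subr x y z : dot z (vsub x y) = dot z x - dot z y.
Proof. by rewrite dot_comm dot_subl !(dot_comm z). Qed.
Lemma dot_scaler a x y : dot y (vscale a x) = a * dot y x.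
Proof. by rewrite dot_comm dot_scalel dot_comm. Qed.
Lemma dot_ge0 x : 0 <= dot x x.
Proof. apply: big_ge0 => i; nra. Qed.
Lemma vnorm_ge0 x : 0 <= vnorm x.
Proof. apply: sqrt_pos. Qed.
Lemma vnorm_sq x : vnorm x * vnorm x = dot x x.
Proof. by rewrite /vnorm sqrt_sqrt //; apply: dot_ge0. Qed.

Lemma cs_sq x y : dot x y * dot x y <= dot x x * dot y y.
Proof.
have Q : forall t, 0 <= dot x x + 2 * t * dot x y + t * t * dot y y.
  move=> t; have := dot_ge0 (vadd x (vscale t y)).
  rewrite !dot_addl !dot_addr !dot_scalel !dot_scaler (dot_comm y x); lra.
have Hy := dot_ge0 y; have Hx := dot_ge0 x.
case: (Rle_lt_or_eq_dec 0 (dot y y) Hy) => Hy'.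
- have := Q (- dot x y / dot y y).
  have E : - dot x y / dot y y * (- dot x y / dot y y) * dot y y = dot x y * dot x y / dot y y.
    by field; lra.
  have E2 : 2 * (- dot x y / dot y y) * dot x y = - 2 * (dot x y * dot x y / dot y y).
    by field; lra.
  rewrite E E2 => H.
  have : dot x y * dot x y / dot y y <= dot x x by lra.
  move=> H2; have := Rmult_le_compat_r (dot y y) _ _ (Rlt_le _ _ Hy') H2.
  have -> : dot x y * dot x y / dot y y * dot y y = dot x y * dot x y by field; lra.
  lra.
- rewrite -Hy'.
  case: (Req_dec (dot x y) 0) => Hxy; first by rewrite Hxy; lra.
  have := Q (- (dot x x + 1) / (2 * dot x y)); rewrite -Hy'.
  have -> : 2 * (- (dot x x + 1) / (2 * dot x y)) * dot x y = - (dot x x + 1) by field.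
  lra.
Qed.

Lemma cs x y : dot x y <= vnorm x * vnorm y.
Proof.
have H := cs_sq x y.
have Hn : 0 <= vnorm x * vnorm y by apply: Rmult_le_pos; apply: vnorm_ge0.
have : (vnorm x * vnorm y) * (vnorm x * vnorm y) = dot x x * dot y y.
  rewrite -vnorm_sq -vnorm_sq; ring.
move=> E; nra.
Qed.

Lemma coord_le_norm x k : Rabs (x k) <= vnorm x.
Proof.
have H : x k * x k <= dot x x by apply: (big_ge1 (fun i => x i * x i)) => i; nra.
rewrite -vnorm_sq in H; have := vnorm_ge0 x.
move=> H0; apply Rabs_le; split; nra.
Qed.

Lemma big_le_sum_norm (p : vec n) : (forall i, 0 <= p i) ->
  vnorm p <= \big[Rplus/0]_(i < n) p i.
Proof.
move=> H; set S := \big[Rplus/0]_(i < n) p i.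
have HS : 0 <= S by apply: big_ge0.
have Hd : dot p p <= S * S.
  rewrite /dot; apply: Rle_trans (_ : \big[Rplus/0]_(i < n) (p i * S) <= _).
    apply: big_le => i; have := big_ge1 p i H; have := H i; rewrite -/S; nra.
  rewrite (eq_bigr (fun i => S * p i)); last by move=> i _; ring.
  rewrite big_scale -/S; lra.
rewrite -vnorm_sq in Hd; have := vnorm_ge0 p; nra.
Qed.

Lemma dot_self_add x y : dot (vadd x y) (vadd x y) = dot x x + 2 * dot x y + dot y y.
Proof. rewrite !dot_addl !dot_addr (dot_comm y x); ring. Qed.

Lemma mink_sq x y : dot (vadd x y) (vadd x y) <= (vnorm x + vnorm y) * (vnorm x + vnorm y).
Proof.
rewrite dot_self_add -!vnorm_sq; have := cs x y; lra.
Qed.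

Lemma vnorm_le_sq x c : 0 <= c -> dot x x <= c * c -> vnorm x <= c.
Proof. move=> Hc; rewrite -vnorm_sq => H; have := vnorm_ge0 x; nra. Qed.

Lemma sq_le_vnorm x c : vnorm x <= c -> dot x x <= c * c.
Proof. move=> H; rewrite -vnorm_sq; have := vnorm_ge0 x; nra. Qed.

Lemma dot_zero x : (forall i, x i = 0) -> dot x x = 0.
Proof. move=> H; rewrite /dot big1 // => i _; rewrite H; ring. Qed.

Lemma vnorm_zero x : (forall i, x i = 0) -> vnorm x = 0.
Proof. move=> H; rewrite /vnorm dot_zero // sqrt_0 //. Qed.

Lemma vnorm_scale a x : 0 <= a -> vnorm (vscale a x) = a * vnorm x.
Proof.
move=> Ha; rewrite /vnorm dot_scalel dot_scaler -Rmult_assoc sqrt_mult_alt; last nra.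
by rewrite sqrt_square.
Qed.

Lemma small_lin (c K : R) : 0 <= K -> (forall l, 0 < l <= 1 -> 0 <= l * c + l * l * K) -> 0 <= c.
Proof.
move=> HK H; case: (Rle_or_lt 0 c) => // Hc.
set l := Rmin 1 (- c / (2 * (K + 1))).
have Hl1 : l <= 1 by apply: Rmin_l.
have Hl2 : l <= - c / (2 * (K + 1)) by apply: Rmin_r.
have Hl0 : 0 < l.
  apply: Rmin_glb_lt; first lra.
  apply: Rdiv_lt_0_compat; lra.
have := H l (conj Hl0 Hl1) => H1.
have H2 : 0 <= c + l * K.
  have : 0 <= l * (c + l * K) by nra.
  move=> H3; apply: (Rmult_le_reg_l l); lra.
have H3 : l * (2 * (K + 1)) <= - c.
  have := Rmult_le_compat_r (2 * (K + 1)) _ _ (ltac:(lra) : 0 <= 2 * (K+1)) Hl2.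
  by rewrite /Rdiv Rmult_assoc Rinv_l ?Rmult_1_r; last lra.
nra.
Qed.
End V.

Lemma neg_le_abs x : - x <= Rabs x.
Proof. rewrite -Rabs_Ropp; apply: Rle_abs. Qed.

Lemma in_nbhd {n} (X0 : vec n -> Prop) del x : 0 < del -> X0 x -> nbhd X0 del x.
Proof.
move=> Hd Hx; exists x; split => //; rewrite vnorm_zero //.
move=> i; rewrite /vsub; ring.
Qed.

Lemma grad_ineq {n} (X0 : vec n -> Prop) f x z v del : 0 < del ->
  convex_on (nbhd X0 del) f -> X0 x -> X0 z -> has_grad f x v ->
  f x + dot v (vsub z x) <= f z.
Proof.
move=> Hdel Hcv Hx Hz Hg.
set w := vsub z x.
case: (Rle_or_lt (f x + dot v w) (f z)) => [H0|Hc]; first exact H0.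
set c := f x + dot v w - f z.
have Hw := vnorm_ge0 w.
have He : 0 < c / (2 * (vnorm w + 1)) by apply: Rdiv_lt_0_compat; rewrite /c; lra.
case: (Hg _ He) => d [Hd Hh].
set l := Rmin 1 (d / (2 * (vnorm w + 1))).
have Hl1 : l <= 1 by apply: Rmin_l.
have Hl2 : l <= d / (2 * (vnorm w + 1)) by apply: Rmin_r.
have Hl0 : 0 < l.
  apply: Rmin_glb_lt; first lra.
  apply: Rdiv_lt_0_compat; lra.
have Hl3 : l * (2 * (vnorm w + 1)) <= d.
  have := Rmult_le_compat_r (2 * (vnorm w + 1)) _ _ (ltac:(lra) : 0 <= 2 * (vnorm w+1)) Hl2.
  by rewrite /Rdiv Rmult_assoc Rinv_l ?Rmult_1_r; last lra.
have Hnh : vnorm (vscale l w) = l * vnorm w by apply: vnorm_scale; lra.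
have := Hh (vscale l w) ltac:(rewrite Hnh; nra).
have -> : vadd x (vscale l w) = vcomb l z x.
  apply: functional_extensionality => i; rewrite /vcomb /vadd /vscale /w /vsub; ring.
rewrite Hnh dot_scaler.
have := Hcv z x l (in_nbhd X0 del z Hdel Hz) (in_nbhd X0 del x Hdel Hx) (conj (Rlt_le _ _ Hl0) Hl1).
move=> Hconv Habs.
have Habs' := Rle_trans _ _ _ (neg_le_abs _) Habs.
have H1 : l * c <= c / (2 * (vnorm w + 1)) * (l * vnorm w).
  have E : l * c = -(l * f z + (1 - l) * f x - f x - l * dot v w) by rewrite /c; ring.
  rewrite E; lra.
have H2 : c / (2 * (vnorm w + 1)) * (l * vnorm w) = l * c * (vnorm w / (2 * (vnorm w + 1))).
  field; lra.
have H3 : vnorm w / (2 * (vnorm w + 1)) < 1.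
  apply: (Rmult_lt_reg_r (2 * (vnorm w + 1))); first lra.
  rewrite /Rdiv Rmult_assoc Rinv_l; lra.
have : 0 < l * c by apply: Rmult_lt_0_compat; rewrite /c; lra.
nra.
Qed.

Lemma sc_min {n} (X0 : vec n -> Prop) (phi : vec n -> R) (xt x1 : vec n) (alp : R) :
  convex_set X0 -> 0 <= alp ->
  (forall x y l, X0 x -> X0 y -> 0 <= l <= 1 -> phi (vcomb l x y) <= l * phi x + (1 - l) * phi y) ->
  X0 x1 ->
  (forall x, X0 x -> phi x1 + alp * dot (vsub x1 xt) (vsub x1 xt)
                     <= phi x + alp * dot (vsub x xt) (vsub x xt)) ->
  forall x, X0 x -> phi x1 + alp * dot (vsub x1 xt) (vsub x1 xt)
                     + alp * dot (vsub x x1) (vsub x x1)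
                   <= phi x + alp * dot (vsub x xt) (vsub x xt).
Proof.
move=> Hcs Ha Hphi Hx1 Hmin x Hx.
set e := vsub x1 xt; set w := vsub x x1.
have Ex : vsub x xt = vadd e w.
  apply: functional_extensionality => i; rewrite /e /w /vadd /vsub; ring.
rewrite Ex dot_self_add.
have Hc : 0 <= phi x - phi x1 + 2 * alp * dot e w.
  apply: (small_lin _ (alp * dot w w)).
    by apply: Rmult_le_pos => //; apply: dot_ge0.
  move=> l Hl.
  have Hz : X0 (vcomb l x x1) by apply: Hcs => //; lra.
  have Ez : vsub (vcomb l x x1) xt = vadd e (vscale l w).
    apply: functional_extensionality => i; rewrite /vcomb /e /w /vadd /vscale /vsub; ring.
  have H1 := Hmin _ Hz; rewrite Ez dot_self_add dot_scaler dot_scalel dot_scaler in H1.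
  have H2 := Hphi x x1 l Hx Hx1 ltac:(lra).
  have E : l * (phi x - phi x1 + 2 * alp * dot e w) + l * l * (alp * dot w w)
     = (l * phi x + (1 - l) * phi x1 + alp * (dot e e + 2 * (l * dot e w) + l * (l * dot w w)))
       - (phi x1 + alp * dot e e) by ring.
  rewrite -/e in H1; rewrite E; lra.
nra.
Qed.

Lemma cs_abs {n} (x y : vec n) : Rabs (dot x y) <= vnorm x * vnorm y.
Proof.
have H := cs_sq x y.
have Hn : 0 <= vnorm x * vnorm y by apply: Rmult_le_pos; apply: vnorm_ge0.
have : (vnorm x * vnorm y) * (vnorm x * vnorm y) = dot x x * dot y y.
  rewrite -vnorm_sq -vnorm_sq; ring.
move=> E; apply: Rabs_le; split; nra.
Qed.

Lemma vnorm_tri {n} (x y : vec n) : vnorm (vadd x y) <= vnorm x + vnorm y.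
Proof.
apply: vnorm_le_sq; first by have := vnorm_ge0 x; have := vnorm_ge0 y; lra.
exact: mink_sq.
Qed.

Lemma big_add4 {n} (F1 F2 F3 F4 : 'I_n -> R) :
  \big[Rplus/0]_(i < n) (F1 i + F2 i + F3 i + F4 i) =
  \big[Rplus/0]_(i < n) F1 i + \big[Rplus/0]_(i < n) F2 i
  + \big[Rplus/0]_(i < n) F3 i + \big[Rplus/0]_(i < n) F4 i.
Proof. by rewrite !big_split. Qed.

Lemma vnorm_neg {n} (y : vec n) : vnorm (vscale (-1) y) = vnorm y.
Proof. by rewrite /vnorm dot_scalel dot_scaler; f_equal; ring. Qed.

Lemma vnorm_abs {n} (y : vec n) : vnorm (fun k => Rabs (y k)) = vnorm y.
Proof.
rewrite /vnorm /dot; f_equal; apply: eq_bigr => i _.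
rewrite -Rabs_mult Rabs_pos_eq //; nra.
Qed.

Section Period.
Variables (n m : nat) (X0 : vec n -> Prop) (g : 'I_m -> vec n -> R).
Variables (D beta G Rd eps : R).
Hypotheses (HD : 0 < D) (Hb : 0 < beta) (HG : 0 < G) (HR : 0 < Rd) (He : 0 < eps).
Hypothesis Hcs : convex_set X0.
Hypothesis Hgc : forall k, convex_on (fun _ => True) (g k).
Hypothesis Hlip : forall x y, X0 x -> X0 y ->
     vnorm (vsub (gvec g x) (gvec g y)) <= beta * vnorm (vsub x y).
Hypothesis Hgb : forall x, X0 x -> vnorm (gvec g x) <= G.
Hypothesis Hdiam : forall x y, X0 x -> X0 y -> vnorm (vsub x y) <= Rd.
Variable xh : vec n.
Hypotheses (Hxh : X0 xh) (Hsl : forall k, g k xh <= - eps).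
Variable N : nat.
Hypothesis HN : (2 <= N)%nat.
Variables (gam alp sN : R).
Hypotheses (Hgam : 0 < gam) (Hgg : gam * gam = sN) (HsN : 1 <= sN) (HNs : INR N <= sN * sN)
  (Halp : alp = 1/2 * (beta ^ 2 + 1) * sN).
Variables (x : nat -> vec n) (Q : nat -> vec m) (loss : nat -> vec n -> R).
Hypotheses (Hx0 : X0 (x 0)) (HQ0 : forall k, Q 0 k = 0).
Hypothesis Hstep : forall t, (t < N)%nat -> exists v, has_grad (loss t) (x t) v /\
    alg1_step X0 g gam alp (x t) (Q t) v (Q (S t)) (x (S t)).
Hypothesis Hloss : forall t, cvx_diff_near X0 (loss t) /\ grad_bounded X0 (loss t) D.

Definition dd {k} (y : vec k) := dot y y.
Definition bb (y : vec n) : vec m := fun k => gam * g k y.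
Definition aa t := bb (x t).
Definition PP t : vec m := fun k => Q (S t) k + gam * g k (x t).

Lemma xin t : (t <= N)%nat -> X0 (x t).
Proof.
elim: t => [|t IH] Ht; first exact Hx0.
have Ht' : (t < N)%nat by [].
case: (Hstep _ Ht') => v [_ [_ [H _]]]; exact H.
Qed.

Lemma Qrec t k : (t < N)%nat ->
  Q (S t) k = Rmax (- (gam * g k (x t))) (Q t k + gam * g k (x t)).
Proof. move=> Ht; case: (Hstep _ Ht) => v [_ [H _]]; exact: H. Qed.

Lemma Qnn t k : (t <= N)%nat -> 0 <= Q t k.
Proof.
elim: t => [|t IH] Ht; first by rewrite HQ0; lra.
have Ht' : (t < N)%nat by [].
rewrite Qrec //; have := IH (ltnW Ht').
move=> H; case: (Rle_or_lt 0 (gam * g k (x t))) => Hg.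
- apply: Rle_trans (Rmax_r _ _); lra.
- apply: Rle_trans (Rmax_l _ _); lra.
Qed.

Lemma PPnn t k : (t < N)%nat -> 0 <= PP t k.
Proof. move=> Ht; rewrite /PP Qrec //; have := Rmax_l (- (gam * g k (x t))) (Q t k + gam * g k (x t)); lra. Qed.

Lemma Qgrow t k : (t < N)%nat -> Q t k + gam * g k (x t) <= Q (S t) k.
Proof. move=> Ht; rewrite Qrec //; apply: Rmax_r. Qed.

Lemma vnorm_pow2 {k} (y : vec k) : vnorm y ^ 2 = dd y.
Proof. rewrite /dd -vnorm_sq /=; ring. Qed.

Lemma key t : (t < N)%nat -> exists v, has_grad (loss t) (x t) v /\ vnorm v <= D /\
  forall z, X0 z ->
   dot v (vsub (x (S t)) (x t)) + dot (PP t) (bb (x (S t)))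
     + alp * dd (vsub (x (S t)) (x t)) + alp * dd (vsub z (x (S t)))
   <= dot v (vsub z (x t)) + dot (PP t) (bb z) + alp * dd (vsub z (x t)).
Proof.
move=> Ht; case: (Hstep _ Ht) => v [Hg [_ [Hx1 Hmin]]].
exists v; split => //; split.
  by case: (Hloss t) => _ Hb'; exact: (Hb' _ _ (xin t (ltnW Ht)) Hg).
move=> z Hz.
have Halp0 : 0 <= alp by rewrite Halp; nra.
set phi := fun y => dot v (vsub y (x t)) + dot (PP t) (bb y).
have := @sc_min n X0 phi (x t) (x (S t)) alp Hcs Halp0.
apply => //.
- move=> y1 y2 l Hy1 Hy2 Hl; rewrite /phi.
  have E1 : vsub (vcomb l y1 y2) (x t) = vcomb l (vsub y1 (x t)) (vsub y2 (x t)).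
    apply: functional_extensionality => i; rewrite /vcomb /vadd /vscale /vsub; ring.
  rewrite E1 /vcomb dot_addr !dot_scaler.
  have : dot (PP t) (bb (vcomb l y1 y2)) <=
         dot (PP t) (vcomb l (bb y1) (bb y2)).
    rewrite /dot; apply: big_le => k.
    have Hp := PPnn t k Ht.
    have := Hgc k y1 y2 l I I Hl.
    rewrite /bb /vcomb /vadd /vscale => Hc.
    have : gam * g k (fun i => l * y1 i + (1 - l) * y2 i) <= gam * (l * g k y1 + (1 - l) * g k y2).
      by apply: Rmult_le_compat_l; lra.
    move=> H2; have := Rmult_le_compat_l _ _ _ Hp H2; lra.
  rewrite /vcomb dot_addr !dot_scaler; lra.
- move=> y Hy; have := Hmin y Hy; rewrite /phi !vnorm_pow2 /PP /bb /dd //.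
Qed.

Definition Ps t := 1/2 * dd (Q (S t)) - 1/2 * dd (aa t).

Lemma drift_coord q a A :
  1/2 * (Rmax (- A) (q + A) * Rmax (- A) (q + A)) - 1/2 * (A * A) - 1/2 * (q * q) + 1/2 * (a * a)
  <= (q + a) * A + 1/2 * ((A - a) * (A - a)).
Proof.
case: (Rle_or_lt (- A) (q + A)) => H.
- rewrite Rmax_right; last exact H.
  have := Rle_0_sqr A; rewrite /Rsqr; nra.
- rewrite Rmax_left; last lra.
  have := Rle_0_sqr (q + A); rewrite /Rsqr; nra.
Qed.

Lemma drift t : (S t < N)%nat ->
  Ps (S t) - Ps t <= dot (PP t) (aa (S t)) + 1/2 * dd (vsub (aa (S t)) (aa t)).
Proof.
move=> Ht.
have E1 : Ps (S t) - Ps t = \big[Rplus/0]_(k < m)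
   (1/2 * (Q (S (S t)) k * Q (S (S t)) k) + (-1/2) * (aa (S t) k * aa (S t) k)
    + (-1/2) * (Q (S t) k * Q (S t) k) + 1/2 * (aa t k * aa t k)).
  rewrite big_add4 !big_scale /Ps /dd /dot; lra.
have E2 : dot (PP t) (aa (S t)) + 1/2 * dd (vsub (aa (S t)) (aa t)) =
  \big[Rplus/0]_(k < m) (PP t k * aa (S t) k +
     1/2 * ((aa (S t) k - aa t k) * (aa (S t) k - aa t k))).
  rewrite big_split big_scale /dd /dot /vsub //.
rewrite E1 E2; apply: big_le => k.
rewrite (Qrec (S t) k Ht) /PP.
have := drift_coord (Q (S t) k) (aa t k) (aa (S t) k).
rewrite /aa /bb; lra.
Qed.

Lemma aa_norm t : (t <= N)%nat -> vnorm (aa t) <= gam * G.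
Proof.
move=> Ht; change (vnorm (vscale gam (gvec g (x t))) <= gam * G).
rewrite vnorm_scale; last lra.
apply: Rmult_le_compat_l; [lra | apply: Hgb; exact: xin].
Qed.

Lemma aa_diff t : (S t <= N)%nat ->
  dd (vsub (aa (S t)) (aa t)) <= sN * beta ^ 2 * dd (vsub (x (S t)) (x t)).
Proof.
move=> Ht.
have -> : vsub (aa (S t)) (aa t) = vscale gam (vsub (gvec g (x (S t))) (gvec g (x t))).
  apply: functional_extensionality => k; rewrite /aa /bb /vsub /vscale /gvec; ring.
rewrite /dd dot_scalel dot_scaler -Rmult_assoc Hgg.
have H := Hlip _ _ (xin (S t) Ht) (xin t (ltnW Ht)).
have H2 := sq_le_vnorm _ _ H.
have H3 : beta * vnorm (vsub (x t.+1) (x t)) * (beta * vnorm (vsub (x t.+1) (x t))) =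
   beta ^ 2 * dot (vsub (x t.+1) (x t)) (vsub (x t.+1) (x t)).
  rewrite -vnorm_sq; ring.
rewrite H3 in H2.
have := Rmult_le_compat_l sN _ _ ltac:(lra) H2; lra.
Qed.

Lemma comb t z : (S t < N)%nat -> X0 z -> exists v, has_grad (loss t) (x t) v /\ vnorm v <= D /\
  Ps (S t) - Ps t <= dot v (vsub z (x t)) + D ^ 2 / (2 * sN) + dot (PP t) (bb z)
     + alp * (dd (vsub z (x t)) - dd (vsub z (x (S t)))).
Proof.
move=> Ht Hz.
case: (key t (ltnW Ht)) => v [Hg [Hv Hk]].
exists v; split => //; split => //.
have K := Hk z Hz.
have Dr := drift t Ht.
have Ad := aa_diff t (ltnW Ht).
set d := vsub (x (S t)) (x t).
have Hvd : - dot v d <= D * vnorm d.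
  have := cs_abs v d; have := neg_le_abs (dot v d); have := vnorm_ge0 d.
  move=> H0 H1 H2; apply: Rle_trans H1 _; apply: Rle_trans H2 _.
  by apply: Rmult_le_compat_r.
have Hdd : dd d = vnorm d * vnorm d by rewrite /dd vnorm_sq.
have Hq : D * vnorm d - 1/2 * sN * dd d <= D ^ 2 / (2 * sN).
  rewrite Hdd.
  have : 2 * sN * (D * vnorm d - 1 / 2 * sN * (vnorm d * vnorm d)) <= D ^ 2.
    have := Rle_0_sqr (D - sN * vnorm d); rewrite /Rsqr; nra.
  move=> H; apply: (Rmult_le_reg_l (2 * sN)); first lra.
  have -> : 2 * sN * (D ^ 2 / (2 * sN)) = D ^ 2 by field; lra.
  exact: H.
have Hba : aa (S t) = bb (x (S t)) by [].
rewrite -Hba -/d in K.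
have Halpe : alp * dd d - 1/2 * (sN * beta ^ 2 * dd d) = 1/2 * sN * dd d.
  rewrite Halp; ring.
rewrite -/d in Ad; lra.
Qed.

Definition c3 := D * Rd + D ^ 2 / 2 + (beta ^ 2 + 1) * Rd ^ 2 / 2 + G ^ 2 / 2 + eps * G.
Definition BB := c3 / eps + G.

Lemma c3_pos : 0 < c3.
Proof. rewrite /c3; have := Rmult_lt_0_compat _ _ HD HR; have := Rmult_lt_0_compat _ _ He HG; nra. Qed.

Lemma qstep t : (S t < N)%nat ->
  1/2 * dd (Q (S (S t))) <= 1/2 * dd (Q (S t)) + sN * c3 - gam * eps * vnorm (Q (S t)).
Proof.
move=> Ht.
have Hxt := xin t (ltnW (ltnW Ht)).
case: (comb t xh Ht Hxh) => v [_ [Hv C]].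
have H1 : dot v (vsub xh (x t)) <= D * Rd.
  have := cs_abs v (vsub xh (x t)); have := Rle_abs (dot v (vsub xh (x t))).
  have := Hdiam _ _ Hxh Hxt; have := vnorm_ge0 v; have := vnorm_ge0 (vsub xh (x t)).
  move=> A1 A2 A3 A4 A5.
  apply: Rle_trans A4 _; apply: Rle_trans A5 _; apply: Rmult_le_compat => //.
have H2 : D ^ 2 / (2 * sN) <= sN * (D ^ 2 / 2).
  apply: (Rmult_le_reg_l (2 * sN)); first lra.
  have -> : 2 * sN * (D ^ 2 / (2 * sN)) = D ^ 2 by field; lra.
  have -> : 2 * sN * (sN * (D ^ 2 / 2)) = (sN * sN) * D ^ 2 by field.
  have := pow2_ge_0 D; have : 1 <= sN * sN by nra.
  move=> A1 A2; nra.
have Halp0 : 0 <= alp by rewrite Halp; nra.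
have H3 : alp * (dd (vsub xh (x t)) - dd (vsub xh (x (S t)))) <= alp * (Rd * Rd).
  apply: Rmult_le_compat_l => //.
  have := sq_le_vnorm _ _ (Hdiam _ _ Hxh Hxt); have := dot_ge0 (vsub xh (x (S t))).
  rewrite /dd; lra.
have H4 : dot (PP t) (bb xh) <= - (gam * eps) * vnorm (PP t).
  have Hs := big_le_sum_norm (PP t) (fun k => PPnn t k (ltnW Ht)).
  have : dot (PP t) (bb xh) <= - (gam * eps) * \big[Rplus/0]_(k < m) PP t k.
    rewrite -big_scale /dot; apply: big_le => k.
    have := PPnn t k (ltnW Ht); have := Hsl k; rewrite /bb => A1 A2.
    have : gam * g k xh <= - (gam * eps) by have := Rmult_le_compat_l gam _ _ (Rlt_le _ _ Hgam) A1; lra.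
    move=> A3; have := Rmult_le_compat_l _ _ _ A2 A3; lra.
  have : 0 < gam * eps by apply: Rmult_lt_0_compat.
  move=> A1 A2; nra.
have H5 : vnorm (Q (S t)) <= vnorm (PP t) + gam * G.
  have -> : Q (S t) = vadd (PP t) (vscale (-1) (aa t)).
    apply: functional_extensionality => k; rewrite /PP /vadd /vscale /aa /bb; ring.
  apply: Rle_trans (vnorm_tri _ _) _; rewrite vnorm_neg.
  have := aa_norm t (ltnW (ltnW Ht)); lra.
have H6 : dd (aa (S t)) <= sN * (G * G).
  have := sq_le_vnorm _ _ (aa_norm (S t) (ltnW Ht)); rewrite /dd -Hgg; lra.
have H7 : 0 <= dd (aa t) by apply: dot_ge0.
rewrite /Ps in C.
have Hge : 0 <= gam * eps by have := Rmult_lt_0_compat _ _ Hgam He; lra.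
have H8 : - (gam * eps) * vnorm (PP t) <= - (gam * eps) * vnorm (Q (S t)) + gam * eps * (gam * G).
  nra.
have H9 : gam * eps * (gam * G) = sN * (eps * G) by rewrite -Hgg; ring.
have H10 : alp * (Rd * Rd) = sN * ((beta ^ 2 + 1) * Rd ^ 2 / 2) by rewrite Halp; field.
have H11 : D * Rd <= sN * (D * Rd) by have := Rmult_lt_0_compat _ _ HD HR; nra.
rewrite /c3.
have E : sN * (D * Rd + D ^ 2 / 2 + (beta ^ 2 + 1) * Rd ^ 2 / 2 + G ^ 2 / 2 + eps * G) =
  sN * (D * Rd) + sN * (D ^ 2 / 2) + sN * ((beta ^ 2 + 1) * Rd ^ 2 / 2) + 1/2 * (sN * (G * G)) + sN * (eps * G)
  by field.
rewrite E; lra.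
Qed.

Lemma qgrowth t : (t < N)%nat -> vnorm (Q (S t)) <= vnorm (Q t) + gam * G.
Proof.
move=> Ht.
have Ha := aa_norm t (ltnW Ht).
rewrite -(vnorm_abs (aa t)) in Ha.
apply: (Rle_trans _ (vnorm (vadd (Q t) (fun k => Rabs (aa t k))))); last first.
  have := vnorm_tri (Q t) (fun k => Rabs (aa t k)); lra.
apply: vnorm_le_sq; first by have := vnorm_ge0 (vadd (Q t) (fun k => Rabs (aa t k))); lra.
rewrite vnorm_sq /dot; apply: big_le => k.
have H0 := Qnn t k (ltnW Ht); have H1 := Qnn (S t) k Ht.
rewrite /vadd (Qrec t k Ht) in H1 *.
rewrite /aa /bb.
set a := gam * g k (x t).
have := Rabs_pos a.
case: (Rle_or_lt (- a) (Q t k + a)) => H.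
- rewrite Rmax_right; last exact H.
  have : Q t k + a <= Q t k + Rabs a by have := Rle_abs a; lra.
  move=> A1 A2; have A3 : 0 <= Q t k + a by lra.
  nra.
- rewrite Rmax_left; last lra.
  have : - a <= Rabs a by apply: neg_le_abs.
  move=> A1 A2; have A3 : 0 <= - a by lra.
  nra.
Qed.

Lemma qbound t : (1 <= t <= N)%nat -> vnorm (Q t) <= gam * BB.
Proof.
have HB1 : gam * G <= gam * BB.
  rewrite /BB; apply: Rmult_le_compat_l; first lra.
  have := c3_pos; have : 0 < c3 / eps by apply: Rdiv_lt_0_compat => //; apply: c3_pos.
  lra.
elim: t => [|t IH] //= Ht.
case: t IH Ht => [|t] IH Ht.
-
  apply: Rle_trans HB1.
  have := qgrowth 0 ltac:(by apply: leq_trans HN).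
  rewrite (_ : vnorm (Q 0) = 0); first lra.
  by apply: vnorm_zero.
- have Ht' : (S t < N)%nat by [].
  have IH' : vnorm (Q (S t)) <= gam * BB by apply: IH => /=; apply: ltnW.
  have Hq := qstep t Ht'.
  set q := vnorm (Q (S t)).
  have Hq0 : 0 <= q by apply: vnorm_ge0.
  case: (Rle_or_lt (sN * c3) (gam * eps * q)) => Hc.
  + have : dd (Q (S (S t))) <= q * q.
      have Hqq : dd (Q (S t)) = q * q by rewrite /q /dd vnorm_sq.
      rewrite -/q in Hq; lra.
    move=> Hdd; apply: Rle_trans IH'.
    apply: vnorm_le_sq => //.
  + have Hg := qgrowth (S t) Ht'.
    have : q < gam * (c3 / eps).
      apply: (Rmult_lt_reg_l (gam * eps)); first by apply: Rmult_lt_0_compat.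
      have -> : gam * eps * (gam * (c3 / eps)) = sN * c3 by rewrite -Hgg; field; lra.
      exact: Hc.
    rewrite -/q in Hg; rewrite /BB; lra.
Qed.

Lemma viol_tel K k : (S K <= N)%nat -> gam * sum1 (fun j => g k (x j)) K <= Q (S K) k - Q 1 k.
Proof.
elim: K => [|K IH] HK /=; first lra.
have := IH (ltnW HK); have := Qgrow (S K) k HK; lra.
Qed.

Lemma viol M k : (M <= N)%nat -> sum1 (fun j => g k (x j)) M <= BB + G.
Proof.
have HB0 : 0 <= BB.
  rewrite /BB; have : 0 < c3 / eps by apply: Rdiv_lt_0_compat => //; apply: c3_pos.
  lra.
case: M => [|K] HK /=; first lra.
have H1 := viol_tel K k HK.
have H2 := Qnn 1 k ltac:(by apply: leq_trans HN).
have H3 := coord_le_norm (Q (S K)) k.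
have H4 := Rle_abs (Q (S K) k).
have H5 := qbound (S K) ltac:(by []).
have H6 : sum1 (fun j => g k (x j)) K <= BB.
  apply: (Rmult_le_reg_l gam) => //; lra.
have H7 := coord_le_norm (gvec g (x (S K))) k.
have H8 := Hgb _ (xin (S K) HK).
have H9 := Rle_abs (gvec g (x (S K)) k).
rewrite /gvec in H7 H8 H9 *. lra.
Qed.

Lemma Ps_nn t : (t < N)%nat -> 0 <= Ps t.
Proof.
move=> Ht; rewrite /Ps.
have : dd (aa t) <= dd (Q (S t)).
  rewrite /dd /dot; apply: big_le => k.
  rewrite (Qrec t k Ht) /aa /bb.
  have := Qnn t k (ltnW Ht).
  set a := gam * g k (x t).
  move=> H0; case: (Rle_or_lt (- a) (Q t k + a)) => H.
  - rewrite Rmax_right; last exact H.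
    have : 0 <= a * a by nra.
    nra.
  - rewrite Rmax_left; last lra. nra.
lra.
Qed.

Lemma diff_le_DR j z : (j <= N)%nat -> X0 z -> loss j (x j) - loss j z <= D * Rd.
Proof.
move=> Hj Hz.
have Hxj := xin j Hj.
case: (Hloss j) => [[del [Hdel [Hcv Hgr]]] Hgb'].
case: (Hgr (x j) (in_nbhd X0 del (x j) Hdel Hxj)) => v Hv.
have Hvn := Hgb' _ _ Hxj Hv.
have Hgi := grad_ineq _ _ _ _ _ _ Hdel Hcv Hxj Hz Hv.
have := cs_abs v (vsub z (x j)); have := neg_le_abs (dot v (vsub z (x j))).
have := Hdiam _ _ Hz Hxj; have := vnorm_ge0 v; have := vnorm_ge0 (vsub z (x j)).
move=> A1 A2 A3 A4 A5.
have : vnorm v * vnorm (vsub z (x j)) <= D * Rd by apply: Rmult_le_compat.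
lra.
Qed.

Lemma PPbz t z : (t < N)%nat -> (forall k, g k z <= 0) -> dot (PP t) (bb z) <= 0.
Proof.
move=> Ht Hz.
apply: Rle_trans (_ : dot (PP t) (bb z) <= \big[Rplus/0]_(k < m) 0) _.
  rewrite /dot; apply: big_le => k.
  have := PPnn t k Ht; have := Hz k; rewrite /bb => A1 A2.
  have : gam * g k z <= 0 by have := Rmult_le_compat_l gam _ _ (Rlt_le _ _ Hgam) A1; lra.
  move=> A3; have := Rmult_le_compat_l _ _ _ A2 A3; lra.
rewrite big1 //; lra.
Qed.

Lemma reg_tel K z : (S K < N)%nat -> X0 z -> (forall k, g k z <= 0) ->
  sum1 (fun j => loss j (x j) - loss j z) K <=
    INR K * (D ^ 2 / (2 * sN)) + alp * (dd (vsub z (x 1)) - dd (vsub z (x (S K)))) + Ps 1 - Ps (S K).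
Proof.
move=> + Hz Hgz; elim: K => [|K IH] HK; first by rewrite /=; lra.
have IH' := IH (ltnW HK).
case: (comb (S K) z HK Hz) => v [Hv [Hvn C]].
have Hxj := xin (S K) (ltnW (ltnW HK)).
case: (Hloss (S K)) => [[del [Hdel [Hcv _]]] _].
have Hgi := grad_ineq _ _ _ _ _ _ Hdel Hcv Hxj Hz Hv.
have HP := PPbz (S K) z (ltnW HK) Hgz.
rewrite S_INR /=; lra.
Qed.

Definition reg_c1 := D ^ 2 / 2 + (beta ^ 2 + 1) * Rd ^ 2 / 2 + BB ^ 2 / 2 + 2 * D * Rd.

Lemma sum1_shift (a : nat -> R) K r :
  sum1 a (K + r) = sum1 a K + sum1 (fun j => a (K + j)%nat) r.
Proof.
elim: r => [|r IH] /=; first by rewrite addn0; ring.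
by rewrite addnS /= IH; ring.
Qed.

Lemma regret_period M z : (M <= N)%nat -> X0 z -> (forall k, g k z <= 0) ->
  sum1 (fun j => loss j (x j) - loss j z) M <= sN * reg_c1.
Proof.
move=> HM Hz Hgz.
have Halp0 : 0 <= alp by rewrite Halp; nra.
have HDR : 0 <= D * Rd by have := Rmult_lt_0_compat _ _ HD HR; lra.
have A : forall K, (S K < N)%nat ->
   sum1 (fun j => loss j (x j) - loss j z) K <= sN * (D ^ 2 / 2 + (beta ^ 2 + 1) * Rd ^ 2 / 2 + BB ^ 2 / 2).
  move=> K HK.
  have T := reg_tel K z HK Hz Hgz.
  have P1 : INR K * (D ^ 2 / (2 * sN)) <= sN * (D ^ 2 / 2).
    have HKN : INR K <= sN * sN.
      apply: Rle_trans HNs; apply: le_INR; apply/leP; apply: ltnW; apply: ltnW HK.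
    have H0 : 0 <= D ^ 2 / (2 * sN) by apply: Rmult_le_pos; [apply: pow2_ge_0 | apply: Rlt_le; apply: Rinv_0_lt_compat; lra].
    have := Rmult_le_compat_r _ _ _ H0 HKN.
    have -> : sN * sN * (D ^ 2 / (2 * sN)) = sN * (D ^ 2 / 2) by field; lra.
    done.
  have P2 : alp * (dd (vsub z (x 1)) - dd (vsub z (x (S K)))) <= sN * ((beta ^ 2 + 1) * Rd ^ 2 / 2).
    have : alp * (dd (vsub z (x 1)) - dd (vsub z (x (S K)))) <= alp * (Rd * Rd).
      apply: Rmult_le_compat_l => //.
      have := sq_le_vnorm _ _ (Hdiam _ _ Hz (xin 1 ltac:(by apply: leq_trans HN))).
      have := dot_ge0 (vsub z (x (S K))); rewrite /dd; lra.
    have -> : alp * (Rd * Rd) = sN * ((beta ^ 2 + 1) * Rd ^ 2 / 2) by rewrite Halp; field.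
    done.
  have P3 : Ps 1 <= sN * (BB ^ 2 / 2).
    have H2 := qbound 2 ltac:(by []).
    have H3 := sq_le_vnorm _ _ H2.
    have H4 := dot_ge0 (aa 1).
    rewrite /Ps; rewrite /dd.
    have -> : sN * (BB ^ 2 / 2) = 1/2 * (gam * BB * (gam * BB)) by rewrite -Hgg; field.
    have : 0 <= 1/2 * dot (Q 2) (Q 2) <= 1/2 * (gam * BB * (gam * BB)) by split; [have := dot_ge0 (Q 2); lra | lra].
    lra.
  have P4 := Ps_nn (S K) HK.
  lra.
case: (boolP (S M < N)%nat) => HMN.
- have := A M HMN; rewrite /reg_c1.
  have : 0 <= sN * (2 * D * Rd) by apply: Rmult_le_pos; lra.
  lra.
- have E : M = ((N - 2) + (M - (N - 2)))%nat by lia.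
  have Hr : (M - (N - 2) <= 2)%nat by lia.
  have HK : (S (N - 2) < N)%nat by lia.
  rewrite E sum1_shift.
  have A1 := A _ HK.
  have A2 : forall r, (r <= 2)%nat -> (N - 2 + r <= N)%nat ->
     sum1 (fun j => (fun j => loss j (x j) - loss j z) (N - 2 + j)%nat) r <= INR r * (D * Rd).
    elim=> [|r IH] Hr1 Hr2; first by rewrite /=; lra.
    have := IH ltac:(lia) ltac:(lia).
    have := diff_le_DR (N - 2 + S r) z Hr2 Hz.
    rewrite S_INR /=; lra.
  have := A2 _ Hr ltac:(lia).
  have : INR (M - (N - 2)) * (D * Rd) <= 2 * (D * Rd).
    apply: Rmult_le_compat_r => //.
    have : INR (M - (N - 2)) <= INR 2 by apply: le_INR; apply/leP.
    by rewrite /= in Hr *; simpl; lra.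
  have : 2 * (D * Rd) <= sN * (2 * D * Rd) by nra.
  rewrite /reg_c1; lra.
Qed.
End Period.

Lemma sum1_ext (a b : nat -> R) M : (forall j, (1 <= j <= M)%nat -> a j = b j) -> sum1 a M = sum1 b M.
Proof.
elim: M => [|M IH] H //=.
rewrite IH; last by move=> j /andP [H1 H2]; apply: H; rewrite H1 /=; apply: ltnW.
by rewrite H // leqnn andbT.
Qed.

Lemma sum1_sub (a b : nat -> R) M : sum1 (fun s => a s - b s) M = sum1 a M - sum1 b M.
Proof. elim: M => [|M IH] /=; [ring | rewrite IH; ring]. Qed.

Lemma INR_expn2 p : INR (2 ^ p)%nat = 2 ^ p.
Proof. by rewrite pow_INR. Qed.

Lemma pow2_pos p : (0 < 2 ^ p)%nat.
Proof. elim: p => [|p IH] //; rewrite Nat.pow_succ_r'; lia. Qed.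

Lemma pow2_ge2 p : (1 <= p)%nat -> (2 <= 2 ^ p)%nat.
Proof. case: p => [|p] // _; rewrite Nat.pow_succ_r'; have := pow2_pos p; lia. Qed.

Lemma glob_sum (a : nat -> R) (c Cum : nat -> R) :
  (forall i M, (1 <= i)%nat -> (M <= 2 ^ i)%nat -> sum1 (fun j => a (glob_round i j)) M <= c i) ->
  c 1%nat <= Cum 1%nat -> (forall p, (1 <= p)%nat -> Cum p + c (S p) <= Cum (S p)) ->
  forall p, (1 <= p)%nat -> forall M, (M <= 2 ^ p)%nat -> sum1 a (2 ^ p - 2 + M) <= Cum p.
Proof.
move=> Hc H1 Hs; elim=> [|p IH] // Hp M HM.
case: p IH Hp HM => [|p] IH Hp HM.
- have := Hc 1%nat M isT HM.
  rewrite (@sum1_ext _ a); first by rewrite /= => ?; lra.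
  by move=> j _; rewrite /glob_round.
- set K := (2 ^ p.+2 - 2)%nat.
  rewrite sum1_shift.
  have HK : K = (2 ^ p.+1 - 2 + 2 ^ p.+1)%nat.
    rewrite /K !Nat.pow_succ_r'; have := pow2_pos p; lia.
  have A1 : sum1 a K <= Cum p.+1 by rewrite HK; apply: IH => //.
  have A2 := Hc p.+2 M isT HM.
  have := Hs p.+1 isT.
  rewrite /glob_round -/K in A2; lra.
Qed.

Lemma find_period T : (1 <= T)%nat -> exists p M, (1 <= p)%nat /\ (1 <= M <= 2 ^ p)%nat /\
   T = (2 ^ p - 2 + M)%nat.
Proof.
elim: T => [|T IH] // _.
case: T IH => [|T] IH.
- by exists 1%nat, 1%nat.
- case: (IH isT) => p [M [Hp [HM E]]].
  case: (boolP (M < 2 ^ p)%nat) => HMp.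
  + exists p, M.+1; split => //; split; first by apply/andP.
    rewrite E; have := pow2_pos p; lia.
  + exists p.+1, 1%nat; split => //; split; first by have := pow2_pos p.+1; lia.
    have := pow2_ge2 p Hp; move: HM => /andP [HM1 HM2]; rewrite -leqNgt in HMp.
    rewrite Nat.pow_succ_r'; lia.
Qed.

Lemma ln_le x y : 0 < x -> x <= y -> ln x <= ln y.
Proof.
move=> Hx Hxy; case: (Rle_lt_or_eq_dec _ _ Hxy) => H.
- by apply: Rlt_le; apply: ln_increasing.
- by rewrite H; apply: Rle_refl.
Qed.

Lemma c1_pos D beta G Rd eps : 0 < D -> 0 < beta -> 0 < G -> 0 < Rd -> 0 < eps ->
  0 < reg_c1 D beta G Rd eps /\ 0 < BB D beta G Rd eps.
Proof.
move=> HD Hb HG HR He.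
have Hc3 : 0 < c3 D beta G Rd eps by apply: c3_pos.
have HBB : 0 < BB D beta G Rd eps.
  rewrite /BB; have : 0 < c3 D beta G Rd eps / eps by apply: Rdiv_lt_0_compat.
  lra.
split => //.
rewrite /reg_c1.
have := pow2_ge_0 D; have := pow2_ge_0 Rd; have := pow2_ge_0 beta; have := pow2_ge_0 (BB D beta G Rd eps).
have := Rmult_lt_0_compat _ _ HD HR.
move=> A1 A2 A3 A4 A5.
have : 0 <= (beta ^ 2 + 1) * Rd ^ 2 by apply: Rmult_le_pos; lra.
lra.
Qed.

Theorem theorem3 :
  forall D beta G Rd eps : R,
    0 < D -> 0 < beta -> 0 < G -> 0 < Rd -> 0 < eps ->
  exists C1 C2 : R, 0 < C1 /\ 0 < C2 /\
  forall (n m : nat) (X0 : vec n -> Prop) (g : 'I_m -> vec n -> R)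
         (f : nat -> vec n -> R),
    setting X0 g f D beta G Rd eps ->
  forall (h : nat -> vec n -> R) (xs : nat -> nat -> vec n)
         (Qs : nat -> nat -> vec m) (y : nat -> vec n),
    doubling_run X0 g f D beta h xs Qs y ->
  forall (T : nat) (xstar : vec n) (k : 'I_m),
    (2 <= T)%nat -> X0 xstar -> (forall k', g k' xstar <= 0) ->
    sum1 (fun s => f s (y s)) T - sum1 (fun s => f s xstar) T
      <= C1 * sqrt (INR T)
    /\ sum1 (fun s => g k (y s)) T <= C2 * log2 (INR T).
Proof.
move=> D beta G Rd eps HD Hb HG HR He.
have [Hc1 HBB] := c1_pos _ _ _ _ _ HD Hb HG HR He.
set c1' := reg_c1 D beta G Rd eps.
set cv := BB D beta G Rd eps + G.
exists (6 * c1'), (2 * cv).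
split; first by rewrite /c1'; lra.
split; first by rewrite /cv; lra.
move=> n m X0 g f Hset h xs Qs y Hrun T xstar k HT Hxs Hgs.
case: Hset => [_ [_ [_ [_ [Hcs [Hgcv [Hfc [_ [_ [_ [_ [Hfb [Hlip [Hgb [Hdiam [_ [xh [Hxh Hsl]]]]]]]]]]]]]]]]]].
have Hgc : forall k, convex_on (fun _ => True) (g k) by move=> k'; case: (Hgcv k').
have per : forall i, (1 <= i)%nat ->
   (forall M, (M <= 2 ^ i)%nat -> sum1 (fun j => local_loss f (h i) i j (xs i j)
          - local_loss f (h i) i j xstar) M <= sqrt (2 ^ i) * c1') /\
   (forall M, (M <= 2 ^ i)%nat -> sum1 (fun j => g k (xs i j)) M <= cv).
  move=> i Hi.
  case: (Hrun i Hi) => Hh1 [Hh2 [Hx0 [HQ0 [Hst Hy]]]].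
  have HN := pow2_ge2 i Hi.
  have H2i : 1 <= 2 ^ i by apply: pow_R1_Rle; lra.
  have Hgam : 0 < Rpower (2 ^ i) (1 / 4) by rewrite /Rpower; apply: exp_pos.
  have Hgg : Rpower (2 ^ i) (1 / 4) * Rpower (2 ^ i) (1 / 4) = sqrt (2 ^ i).
    rewrite -Rpower_plus -Rpower_sqrt; last lra.
    f_equal; field.
  have HsN : 1 <= sqrt (2 ^ i) by rewrite -sqrt_1; apply: sqrt_le_1_alt.
  have HNs : INR (2 ^ i)%nat <= sqrt (2 ^ i) * sqrt (2 ^ i).
    rewrite sqrt_sqrt; last lra. rewrite INR_expn2; lra.
  have Hloss : forall t, cvx_diff_near X0 (local_loss f (h i) i t) /\
                        grad_bounded X0 (local_loss f (h i) i t) D.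
    by case => [|t] /=; [split | split; [apply: Hfc | apply: Hfb]].
  split => M HM.
  - exact: (regret_period _ _ _ _ _ _ _ _ _ HD Hb HG HR He Hcs Hgc Hlip Hgb Hdiam _ Hxh Hsl _ HN _ _ _ Hgam Hgg HsN HNs
             (erefl _) _ _ _ Hx0 HQ0 Hst Hloss _ _ HM Hxs Hgs).
  - exact: (viol _ _ _ _ _ _ _ _ _ HD Hb HG HR He Hcs Hgc Hlip Hgb Hdiam _ Hxh Hsl _ HN _ _ _ Hgam Hgg HsN
             (erefl _) _ _ _ Hx0 HQ0 Hst Hloss _ k HM).
have Hloc : forall i j, (1 <= i)%nat -> (1 <= j <= 2 ^ i)%nat ->
   y (glob_round i j) = xs i j /\ local_loss f (h i) i j = f (glob_round i j).
  move=> i j Hi Hj; case: (Hrun i Hi) => _ [_ [_ [_ [_ Hy]]]].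
  split; first exact: Hy.
  by case: j Hj.
case: (find_period T ltac:(by apply: leq_trans HT)) => p [M [Hp [HM ET]]].
have HM2 : (M <= 2 ^ p)%nat by case/andP: HM.
have Hr2 : 0 <= sqrt 2 by apply: sqrt_pos.
have Hr22 : sqrt 2 * sqrt 2 = 2 by apply: sqrt_sqrt; lra.
split.
- rewrite -sum1_sub.
  have S1 : forall i M', (1 <= i)%nat -> (M' <= 2 ^ i)%nat ->
     sum1 (fun j => (fun s => f s (y s) - f s xstar) (glob_round i j)) M' <= sqrt (2 ^ i) * c1'.
    move=> i M' Hi HM'.
    rewrite (@sum1_ext _ (fun j => local_loss f (h i) i j (xs i j) - local_loss f (h i) i j xstar)).
      by case: (per i Hi) => P _; apply: P.
    move=> j Hj; have Hj' : (1 <= j <= 2 ^ i)%nat.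
      by move: Hj => /andP [A B]; rewrite A /=; apply: leq_trans HM'.
    by case: (Hloc i j Hi Hj') => -> ->.
  have Hc1' : 0 < c1' by rewrite /c1'.
  have S2 : sqrt (2 ^ 1) * c1' <= 4 * c1' * sqrt (2 ^ 1).
    have : 0 <= sqrt (2 ^ 1) by apply: sqrt_pos.
    move=> A; nra.
  have S3 : forall q, (1 <= q)%nat -> 4 * c1' * sqrt (2 ^ q) + sqrt (2 ^ q.+1) * c1' <= 4 * c1' * sqrt (2 ^ q.+1).
    move=> q Hq.
    have -> : sqrt (2 ^ q.+1) = sqrt 2 * sqrt (2 ^ q).
      rewrite -sqrt_mult; [by [] | lra | apply: pow_le; lra].
    have := sqrt_pos (2 ^ q); move=> A.
    have : 4 <= 3 * sqrt 2 by nra.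
    move=> B; have : 0 <= c1' * sqrt (2 ^ q) by apply: Rmult_le_pos; lra.
    nra.
  have Hs := glob_sum (fun s => f s (y s) - f s xstar) _ _ S1 S2 S3 p Hp M HM2.
  rewrite -ET in Hs.
  have HTp : 2 ^ p <= 2 * INR T.
    rewrite -INR_expn2 -(INR_IZR_INZ 2) -mult_INR; apply: le_INR; apply/leP.
    have := pow2_ge2 p Hp; move: HM => /andP [HM1 _]; lia.
  have HsT : sqrt (2 ^ p) <= sqrt 2 * sqrt (INR T).
    rewrite -sqrt_mult; [apply: sqrt_le_1_alt; lra | lra | apply: pos_INR].
  have : sqrt 2 <= 3 / 2 by nra.
  have := sqrt_pos (INR T); move=> A1 A2.
  have B1 : 4 * c1' * sqrt (2 ^ p) <= 4 * c1' * (sqrt 2 * sqrt (INR T)).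
    apply: Rmult_le_compat_l => //; lra.
  have B2 : sqrt 2 * sqrt (INR T) <= 3 / 2 * sqrt (INR T) by nra.
  have B3 : 4 * c1' * (sqrt 2 * sqrt (INR T)) <= 4 * c1' * (3 / 2 * sqrt (INR T)).
    apply: Rmult_le_compat_l => //; lra.
  have -> : 6 * c1' * sqrt (INR T) = 4 * c1' * (3 / 2 * sqrt (INR T)) by field.
  lra.
- have Hcv : 0 < cv by rewrite /cv; lra.
  have S1 : forall i M', (1 <= i)%nat -> (M' <= 2 ^ i)%nat ->
     sum1 (fun j => (fun s => g k (y s)) (glob_round i j)) M' <= (fun _ => cv) i.
    move=> i M' Hi HM'.
    rewrite (@sum1_ext _ (fun j => g k (xs i j))).
      by case: (per i Hi) => _ P; apply: P.
    move=> j Hj; have Hj' : (1 <= j <= 2 ^ i)%nat.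
      by move: Hj => /andP [A B]; rewrite A /=; apply: leq_trans HM'.
    by case: (Hloc i j Hi Hj') => -> _.
  have S2 : (fun _ => cv) 1%nat <= (fun p => INR p * cv) 1%nat by rewrite /=; lra.
  have S3 : forall q, (1 <= q)%nat -> (fun p => INR p * cv) q + (fun _ => cv) q.+1 <= (fun p => INR p * cv) q.+1.
    by move=> q _; change (INR q * cv + cv <= INR q.+1 * cv); rewrite S_INR; lra.
  have Hs := glob_sum (fun s => g k (y s)) _ _ S1 S2 S3 p Hp M HM2.
  rewrite -ET /= in Hs.
  have Hl2 : 0 < ln 2 by rewrite -ln_1; apply: ln_increasing; lra.
  have HT0 : 2 <= INR T by have := le_INR 2 T ltac:(by apply/leP); rewrite /=.
  case: p Hp HM HM2 ET Hs => [|p'] // _ HM HM2 ET Hs.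
  have HTp : 2 ^ p' <= INR T.
    rewrite -INR_expn2; apply: le_INR; apply/leP.
    rewrite ET; have := pow2_pos p'; move: HM => /andP [HM1 _]; rewrite Nat.pow_succ_r'; lia.
  have L1 : INR p' * ln 2 <= ln (INR T).
    rewrite -ln_pow; last lra.
    apply: ln_le => //; apply: pow_lt; lra.
  have L2 : ln 2 <= ln (INR T) by apply: ln_le; lra.
  have L3 : INR p'.+1 <= 2 * log2 (INR T).
    rewrite /log2 S_INR; apply: (Rmult_le_reg_r (ln 2)) => //.
    have -> : 2 * (ln (INR T) / ln 2) * ln 2 = 2 * ln (INR T) by field; lra.
    lra.
  have := Rmult_le_compat_r cv _ _ (Rlt_le _ _ Hcv) L3.
  have -> : 2 * log2 (INR T) * cv = 2 * cv * log2 (INR T) by ring.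
  lra.
Qed.
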